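(* Let $f \in L^1([-\pi,\pi])$ have real Fourier coefficients. Write $f = f_R + \mathrm{i} f_I$ with $f_R, f_I$ real-valued, and assume $f_R$ is essentially positive. Let $A_n := A_n(f)\in\mathbb{R}^{n\times n}$ be the Toeplitz matrix generated by $f$, let $A_R := A_n(f_R) = (A_n + A_n^T)/2$, and let $Y_n$ be the $n\times n$ exchange matrix. Let \[S := \operatorname*{ess\,sup}_{\theta\in[-\pi,\pi]} \left|\frac{f_I(\theta)}{f_R(\theta)}\right|.\] Then there is $\epsilon$ with $0\le \epsilon\le S$, and $\epsilon<S$ whenever $f_I$ is not zero almost everywhere, such that all eigenvalues of the symmetric matrix $A_R^{-1/2}(Y_n A_n)A_R^{-1/2}$ lie in $[-1-\epsilon,-1]\cup[1,1+\epsilon]$.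
   Context: For $g\in L^1([-\pi,\pi])$, $A_n(g)$ denotes the $n\times n$ Toeplitz matrix whose $(i,j)$ entry is $\frac{1}{2\pi}\int_{-\pi}^{\pi} g(\theta)e^{-\mathrm{i}(i-j)\theta}\,d\theta$. The exchange matrix $Y_n$ has $(Y_n)_{ij}=1$ if $i+j=n+1$ and $0$ otherwise. ''Essentially positive'' means positive almost everywhere. $A_R$ is symmetric positive definite, and $A_R^{-1/2}$ is the inverse of its symmetric positive definite square root. *)

(* Defs.v *)
From HB Require Import structures.
From mathcomp Require Import all_boot all_order all_algebra.
From mathcomp Require Import all_classical all_reals all_analysis.
From mathcomp Require Import complex ess_sup_inf.
Set Implicit Arguments. Unset Strict Implicit. Unset Printing Implicit Defensive.
Import Order.TTheory GRing.Theory Num.Theory.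
Import numFieldNormedType.Exports.
Local Open Scope classical_set_scope.
Local Open Scope ring_scope.
Local Open Scope complex_scope.

Section defs.
Context {R : realType}.
Local Notation mu := (@lebesgue_measure R).

Definition Ipi : set R := `[(- pi)%R, pi]%classic.
Lemma measurable_Ipi : measurable Ipi.
Proof. exact: measurable_itv. Qed.
Definition muI := mrestr mu measurable_Ipi.

(** k-th Fourier coefficient  (1/2pi) \int_{-pi}^{pi} g(t) e^{-i k t} dt
    of the complex function g = gR + i gI, written out in real and
    imaginary parts (e^{-ikt} = cos(kt) - i sin(kt)). *)
Definition fourier_coef (gR gI : R -> R) (k : int) : R[i] :=
  ((2 * pi)^-1 * Rintegral mu Ipi
      (fun t => gR t * cos (k%:~R * t) + gI t * sin (k%:~R * t)))%R
  +i*
  ((2 * pi)^-1 * Rintegral mu Ipi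
      (fun t => gI t * cos (k%:~R * t) - gR t * sin (k%:~R * t)))%R.

Definition toeplitz (n : nat) (gR gI : R -> R) : 'M[R[i]]_n :=
  \matrix_(i < n, j < n) fourier_coef gR gI (i%:Z - j%:Z).

(** entrywise real part (used for matrices whose entries are real) *)
Definition mxRe (n : nat) (M : 'M[R[i]]_n) : 'M[R]_n :=
  \matrix_(i < n, j < n) complex.Re (M i j).

(** exchange matrix: 1 iff i + j = n + 1 (1-based), i.e. i + j = n - 1 (0-based) *)
Definition exchange (n : nat) : 'M[R]_n :=
  \matrix_(i < n, j < n) ((i + j)%N == n.-1)%:R.

Definition spd (n : nat) (B : 'M[R]_n) : Prop :=
  B^T = B /\ forall v : 'cV[R]_n, v != 0 -> 0 < (v^T *m B *m v) 0 0.
End defs.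

(* Main.v *)
Require Import Defs.
From HB Require Import structures.
From mathcomp Require Import all_boot all_order all_algebra.
From mathcomp Require Import all_classical all_reals all_analysis.
From mathcomp Require Import complex ess_sup_inf.
From mathcomp Require Import ring lra zify.
From mathcomp Require Import measurable_realfun.
Import Order.TTheory GRing.Theory Num.Theory.
Import numFieldNormedType.Exports.
Local Open Scope classical_set_scope.
Local Open Scope ring_scope.


Section AN.
Context {R : realType}.
Local Notation mu := (@lebesgue_measure R).

Lemma meas_trig (h : R -> R) (a : R) : continuous h ->
  measurable_fun Ipi (fun t => h (a * t)).
Proof.
move=> ch; apply: measurable_funTS.
apply: (measurableT_comp (f := h) (g := *%R a)).
  exact: measurable_realfun.continuous_measurable_fun.
apply: measurable_realfun.continuous_measurable_fun; exact: (@mulrl_continuous R a).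
Qed.

Lemma int_mul_bdd (g h : R -> R) (a : R) : mu.-integrable Ipi (EFin \o g) ->
  continuous h -> (forall x, `|h x| <= 1) ->
  mu.-integrable Ipi (EFin \o (fun t => g t * h (a * t))).
Proof.
move=> ig ch hb; apply: (@le_integrable _ _ _ mu _ measurable_Ipi _ (EFin \o g)) => //.
  apply/measurable_EFinP; apply: measurable_funM.
    by apply/measurable_EFinP; exact: (measurable_int mu ig).
  apply: (measurable_funS measurableT) => //.
  apply: (measurableT_comp (f := h) (g := *%R a)).
    exact: measurable_realfun.continuous_measurable_fun.
  apply: measurable_realfun.continuous_measurable_fun; exact: (@mulrl_continuous R a).
by move=> x _; rewrite /= lee_fin normrM ler_piMr.
Qed.

Lemma int_cos (g : R -> R) (a : R) : mu.-integrable Ipi (EFin \o g) ->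
  mu.-integrable Ipi (EFin \o (fun t => g t * cos (a * t))).
Proof. by move=> ig; apply: int_mul_bdd => //; [exact: continuous_cos|exact: cos_max]. Qed.

Lemma int_sin (g : R -> R) (a : R) : mu.-integrable Ipi (EFin \o g) ->
  mu.-integrable Ipi (EFin \o (fun t => g t * sin (a * t))).
Proof. by move=> ig; apply: int_mul_bdd => //; [exact: continuous_sin|exact: sin_max]. Qed.

Lemma muI_gt0 : (0 < muI [set: R])%E.
Proof.
rewrite /muI /mrestr setTI /Ipi lebesgue_measure_itv /= ifT.
  by rewrite lte_fin subr_gt0 gtrN ?pi_gt0.
by rewrite lte_fin gtrN ?pi_gt0.
Qed.

End AN.

Section PW.
Context {R : realType} {n : nat}.

Definition crow (t : R) : 'rV[R]_n := \row_i cos ((i%:Z)%:~R * t).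
Definition srow (t : R) : 'rV[R]_n := \row_i sin ((i%:Z)%:~R * t).

Lemma bil (a b : 'rV[R]_n) (M : 'M[R]_n) :
  (a *m M *m b^T) 0 0 = \sum_i \sum_j a 0 i * M i j * b 0 j.
Proof.
rewrite mxE (eq_bigr (fun j => \sum_i a 0 i * M i j * b 0 j)).
  by rewrite exchange_big.
by move=> j _; rewrite !mxE mulr_suml.
Qed.

Lemma one_mul (u v : 'rV[R]_n) (w z : 'rV[R]_n) :
  ((u *m v^T) *m (w *m z^T)) 0 0 = (u *m v^T) 0 0 * (w *m z^T) 0 0.
Proof. by rewrite mxE big_ord1. Qed.

Lemma add00 (X Y : 'M[R]_1) : (X + Y) 0 0 = X 0 0 + Y 0 0.
Proof. by rewrite mxE. Qed.
Lemma sub00 (X Y : 'M[R]_1) : (X - Y) 0 0 = X 0 0 - Y 0 0.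
Proof. by rewrite !mxE. Qed.
Lemma scal_tr' (u w : 'rV[R]_n) : (u *m w^T) 0 0 = (w *m u^T) 0 0.
Proof. by rewrite !mxE; apply: eq_bigr => i _; rewrite !mxE mulrC. Qed.

Lemma cosM_eq (t : R) :
  \matrix_(i < n, j < n) cos ((i%:Z - j%:Z)%:~R * t) =
  (crow t)^T *m crow t + (srow t)^T *m srow t.
Proof.
apply/matrixP => i j; rewrite !mxE !big_ord1 !mxE intrB mulrBl cosB.
done.
Qed.

Lemma sinM_eq (t : R) :
  \matrix_(i < n, j < n) sin ((i%:Z - j%:Z)%:~R * t) =
  (srow t)^T *m crow t - (crow t)^T *m srow t.
Proof.
apply/matrixP => i j; rewrite !mxE !big_ord1 !mxE intrB mulrBl sinB.
done.
Qed.

Lemma quad_cos (t : R) (a : 'rV[R]_n) :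
  (a *m (\matrix_(i < n, j < n) cos ((i%:Z - j%:Z)%:~R * t)) *m a^T) 0 0 =
  (a *m (crow t)^T) 0 0 ^+ 2 + (a *m (srow t)^T) 0 0 ^+ 2.
Proof.
rewrite cosM_eq mulmxDr mulmxDl !mulmxA -(mulmxA (a *m (crow t)^T)).
rewrite -(mulmxA (a *m (srow t)^T)) add00 !one_mul.
by rewrite (scal_tr' (crow t)) (scal_tr' (srow t)) !expr2.
Qed.

Lemma bil_sin (t : R) (a b : 'rV[R]_n) :
  (a *m (\matrix_(i < n, j < n) sin ((i%:Z - j%:Z)%:~R * t)) *m b^T) 0 0 =
  (a *m (srow t)^T) 0 0 * (b *m (crow t)^T) 0 0 -
  (a *m (crow t)^T) 0 0 * (b *m (srow t)^T) 0 0.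
Proof.
rewrite sinM_eq mulmxBr mulmxBl !mulmxA -(mulmxA (a *m (crow t)^T)).
rewrite -(mulmxA (a *m (srow t)^T)) sub00 !one_mul.
by rewrite (scal_tr' (crow t)) (scal_tr' (srow t)).
Qed.

End PW.

Section AN2.
Context {R : realType}.
Local Notation mu := (@lebesgue_measure R).

Lemma ae_muI (P : R -> Prop) : {ae muI, forall x, P x} -> {ae mu, forall x, Ipi x -> P x}.
Proof.
case=> N [mN N0 sub]; exists (N `&` Ipi); split.
- exact: measurableI mN measurable_Ipi.
- exact: N0.
- by move=> x /= /not_implyP [Ix nP]; split => //; apply: sub.
Qed.

Lemma Rint_ae_ge0 (G : R -> R) : mu.-integrable Ipi (EFin \o G) ->
  {ae muI, forall x, 0 <= G x} -> 0 <= Rintegral mu Ipi G.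
Proof.
move=> iG aeG.
have mG : measurable_fun Ipi G by apply/measurable_EFinP; exact: (measurable_int mu iG).
rewrite /Rintegral (@ae_eq_integral _ _ _ mu Ipi (fun x => (Num.max (G x) 0)%:E)).
- apply: fine_ge0; apply: integral_ge0 => x _; by rewrite lee_fin le_max lexx orbT.
- exact: measurable_Ipi.
- by apply/measurable_EFinP.
- by apply/measurable_EFinP; apply: measurable_maxr => //.
- rewrite /ae_eq; case: (ae_muI _ aeG) => N [mN N0 sub]; exists N; split => //.
  move=> x /= nx; apply: sub => /= h; apply: nx => Ix; congr EFin.
  by rewrite max_l //; apply: h.
Qed.

Lemma int_sumf (I : Type) (r : seq I) (F : I -> R -> R) :
  (forall i, mu.-integrable Ipi (EFin \o F i)) ->
  mu.-integrable Ipi (EFin \o (fun t => \sum_(i <- r) F i t)).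
Proof.
move=> iF.
have -> : EFin \o (fun t => \sum_(i <- r) F i t) = (fun t => \sum_(i <- r) (EFin \o F i) t).
  by apply/funext => t /=; rewrite sumEFin.
apply: integrable_sum => *; first [exact: measurable_Ipi | exact: iF | idtac].
Qed.

Lemma int_scale (c : R) (f : R -> R) :
  mu.-integrable Ipi (EFin \o f) -> mu.-integrable Ipi (EFin \o (fun t => c * f t)).
Proof.
move=> i; have -> : EFin \o (fun t => c * f t) = (fun t => (c%:E * (EFin \o f) t)%E).
  by apply/funext => t /=; rewrite EFinM.
by apply: integrableZl => //; exact: measurable_Ipi.
Qed.

Lemma Rint_sum (I : Type) (r : seq I) (F : I -> R -> R) :
  (forall i, mu.-integrable Ipi (EFin \o F i)) ->
  Rintegral mu Ipi (fun t => \sum_(i <- r) F i t) = \sum_(i <- r) Rintegral mu Ipi (F i).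
Proof.
move=> iF; elim: r => [|h r IH].
  rewrite big_nil /Rintegral; under eq_integral do rewrite big_nil.
  by rewrite integral0.
rewrite big_cons -IH; under eq_Rintegral do rewrite big_cons.
apply: RintegralD; first exact: measurable_Ipi.
  exact: iF.
have -> : EFin \o (fun t => \sum_(i <- r) F i t) = (fun t => \sum_(i <- r) (EFin \o F i) t).
  by apply/funext => t /=; rewrite sumEFin.
apply: integrable_sum => *; first [exact: measurable_Ipi | exact: iF | idtac].
Qed.

Lemma int_bil (n : nat) (h : int -> R -> R) (a b : 'rV[R]_n) :
  (forall k, mu.-integrable Ipi (EFin \o h k)) ->
  mu.-integrable Ipi (EFin \o (fun t => (a *m (\matrix_(i < n, j < n) h (i%:Z - j%:Z) t) *m b^T) 0 0)) /\
  (a *m (\matrix_(i < n, j < n) Rintegral mu Ipi (h (i%:Z - j%:Z))) *m b^T) 0 0 =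
   Rintegral mu Ipi (fun t => (a *m (\matrix_(i < n, j < n) h (i%:Z - j%:Z) t) *m b^T) 0 0).
Proof.
move=> ih.
have E : (fun t => (a *m (\matrix_(i < n, j < n) h (i%:Z - j%:Z) t) *m b^T) 0 0) =
  (fun t => \sum_i \sum_j (a 0 i * b 0 j) * h (i%:Z - j%:Z) t).
  apply/funext => t; rewrite bil; apply: eq_bigr => i _; apply: eq_bigr => j _.
  by rewrite mxE; ring.
have iij : forall i j : 'I_n, mu.-integrable Ipi (EFin \o (fun t => (a 0 i * b 0 j) * h (i%:Z - j%:Z) t)).
  by move=> i j; apply: int_scale.
rewrite E; split.
  by apply: int_sumf => i; apply: int_sumf => j; exact: iij.
rewrite bil Rint_sum; last by move=> i; apply: int_sumf => j; exact: iij.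
apply: eq_bigr => i _; rewrite Rint_sum; last by move=> j; exact: iij.
apply: eq_bigr => j _; rewrite RintegralZl; last exact: ih.
  by rewrite mxE; ring.
exact: measurable_Ipi.
Qed.

End AN2.


Section H1.
Context {R : realType}.
Local Notation mu := (@lebesgue_measure R).

Lemma bilZ n (k : R) (a b : 'rV[R]_n) (M : 'M[R]_n) :
  (a *m (k *: M) *m b^T) 0 0 = k * (a *m M *m b^T) 0 0.
Proof. by rewrite -scalemxAr -scalemxAl mxE. Qed.

Lemma pw_ineq (w u Ca Sa Cb Sb : R) : `|u| <= w ->
  2 * (u * (Sa * Cb - Ca * Sb)) <= w * (Ca ^+ 2 + Sa ^+ 2) + w * (Cb ^+ 2 + Sb ^+ 2).
Proof.
move=> uw; rewrite -subr_ge0.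
have -> : w * (Ca ^+ 2 + Sa ^+ 2) + w * (Cb ^+ 2 + Sb ^+ 2) - 2 * (u * (Sa * Cb - Ca * Sb)) =
   (w + u) / 2 * ((Sa - Cb) ^+ 2 + (Ca + Sb) ^+ 2) +
   (w - u) / 2 * ((Sa + Cb) ^+ 2 + (Ca - Sb) ^+ 2) by field.
have h1 : 0 <= w + u by move: uw; rewrite ler_norml; lra.
have h2 : 0 <= w - u by move: uw; rewrite ler_norml; lra.
by apply: addr_ge0; apply: mulr_ge0; rewrite ?divr_ge0 // addr_ge0 // sqr_ge0.
Qed.

Lemma int_add (f g : R -> R) :
  mu.-integrable Ipi (EFin \o f) -> mu.-integrable Ipi (EFin \o g) ->
  mu.-integrable Ipi (EFin \o (fun t => f t + g t)).
Proof.
move=> i1 i2; have -> : EFin \o (fun t => f t + g t) = ((EFin \o f) \+ (EFin \o g))%E.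
  by apply/funext => t /=; rewrite EFinD.
by apply: integrableD => //; exact: measurable_Ipi.
Qed.

Lemma int_sub (f g : R -> R) :
  mu.-integrable Ipi (EFin \o f) -> mu.-integrable Ipi (EFin \o g) ->
  mu.-integrable Ipi (EFin \o (fun t => f t - g t)).
Proof.
move=> i1 i2; have -> : EFin \o (fun t => f t - g t) = ((EFin \o f) \- (EFin \o g))%E.
  by apply/funext => t /=; rewrite EFinB.
by apply: integrableB => //; exact: measurable_Ipi.
Qed.

Lemma ae2 (P Q S : R -> Prop) : {ae muI, forall x, P x} -> {ae muI, forall x, Q x} ->
  (forall x, P x -> Q x -> S x) -> {ae muI, forall x, S x}.
Proof.
move=> h1 h2 h; apply: (negligibleS _ (negligibleU h1 h2)) => x /= nS.
have [px|npx] := pselect (P x); last by left.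
have [qx|nqx] := pselect (Q x); last by right.
by exfalso; apply: nS; apply: h.
Qed.

Definition hR (g : R -> R) (k : int) t := g t * cos (k%:~R * t).
Definition hS (g : R -> R) (k : int) t := g t * sin (k%:~R * t).

Lemma matR n (g : R -> R) x :
  \matrix_(i < n, j < n) hR g (i%:Z - j%:Z) x = g x *: \matrix_(i < n, j < n) cos ((i%:Z - j%:Z)%:~R * x).
Proof. by apply/matrixP => i j; rewrite !mxE. Qed.

Lemma matS n (g : R -> R) x :
  \matrix_(i < n, j < n) hS g (i%:Z - j%:Z) x = g x *: \matrix_(i < n, j < n) sin ((i%:Z - j%:Z)%:~R * x).
Proof. by apply/matrixP => i j; rewrite !mxE. Qed.

Lemma H1an n (fR fI : R -> R) (s : R) :
  mu.-integrable Ipi (EFin \o fR) -> mu.-integrable Ipi (EFin \o fI) ->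
  {ae muI, forall x, 0 < fR x} -> {ae muI, forall x, `|fI x / fR x| <= s} ->
  forall (k : R) (a b : 'rV[R]_n), 0 < k ->
  2 * (a *m (k *: \matrix_(i < n, j < n) Rintegral mu Ipi (hS fI (i%:Z - j%:Z))) *m b^T) 0 0 <=
  s * ((a *m (k *: \matrix_(i < n, j < n) Rintegral mu Ipi (hR fR (i%:Z - j%:Z))) *m a^T) 0 0 +
       (b *m (k *: \matrix_(i < n, j < n) Rintegral mu Ipi (hR fR (i%:Z - j%:Z))) *m b^T) 0 0).
Proof.
move=> iR iI aeR aeI k a b k0.
have iHR : forall m, mu.-integrable Ipi (EFin \o hR fR m) by move=> m; exact: int_cos.
have iHS : forall m, mu.-integrable Ipi (EFin \o hS fI m) by move=> m; exact: int_sin.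
have [ia ea] := int_bil n (hR fR) a a iHR.
have [ib eb] := int_bil n (hR fR) b b iHR.
have [iab eab] := int_bil n (hS fI) a b iHS.
rewrite !bilZ ea eb eab.
set qa := (fun t => (a *m _ *m a^T) 0 0) in ia *.
set qb := (fun t => (b *m _ *m b^T) 0 0) in ib *.
set qab := (fun t => (a *m _ *m b^T) 0 0) in iab *.
have i1 := int_scale s _ ia.
have i2 := int_scale s _ ib.
have i3 := int_scale 2 _ iab.
have i12 := int_add _ _ i1 i2.
have iG : mu.-integrable Ipi (EFin \o (fun t => (s * qa t + s * qb t) - 2 * qab t)).
  exact: int_sub _ _ i12 i3.
have eG : Rintegral mu Ipi (fun t => (s * qa t + s * qb t) - 2 * qab t) =
   s * Rintegral mu Ipi qa + s * Rintegral mu Ipi qb - 2 * Rintegral mu Ipi qab.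
  rewrite RintegralB; [| exact: measurable_Ipi | exact: i12 | exact: i3].
  rewrite RintegralD; [| exact: measurable_Ipi | exact: i1 | exact: i2].
  rewrite RintegralZl; [| exact: measurable_Ipi | exact: ia].
  rewrite RintegralZl; [| exact: measurable_Ipi | exact: ib].
  by rewrite RintegralZl; [| exact: measurable_Ipi | exact: iab].
have aeG : {ae muI, forall x, 0 <= (s * qa x + s * qb x) - 2 * qab x}.
  apply: (ae2 _ _ (fun x => 0 <= s * qa x + s * qb x - 2 * qab x) aeI aeR) => x xI xR.
  rewrite /qa /qb /qab !matR matS !bilZ !quad_cos bil_sin subr_ge0.
  rewrite !(mulrA s (fR x)).
  apply: pw_ineq.
  have -> : fI x = fI x / fR x * fR x by rewrite divfK // gt_eqF.
  by rewrite normrM (gtr0_norm xR) ler_pM2r.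
have := Rint_ae_ge0 _ iG aeG; rewrite eG => h.
rewrite -subr_ge0; have -> : s * (k * Rintegral mu Ipi qa + k * Rintegral mu Ipi qb) -
  2 * (k * Rintegral mu Ipi qab) =
  k * (s * Rintegral mu Ipi qa + s * Rintegral mu Ipi qb - 2 * Rintegral mu Ipi qab) by ring.
by rewrite mulr_ge0 // ltW.
Qed.

End H1.


Section LA.
Context {R : realType} {n : nat}.

Lemma sq_ge0 (u : 'rV[R]_n) : 0 <= (u *m u^T) 0 0.
Proof.
rewrite mxE; apply: sumr_ge0 => i _; by rewrite mxE -expr2 sqr_ge0.
Qed.

Lemma sq_gt0 (u : 'rV[R]_n) : u != 0 -> 0 < (u *m u^T) 0 0.
Proof.
move=> /rV0Pn [i ui]; rewrite mxE (bigD1 i) //= ltr_pwDl //.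
  by rewrite mxE -expr2 lt_def sqr_ge0 andbT sqrf_eq0.
by apply: sumr_ge0 => j _; by rewrite mxE -expr2 sqr_ge0.
Qed.

Lemma scal_tr (u w : 'rV[R]_n) : (u *m w^T) 0 0 = (w *m u^T) 0 0.
Proof. by rewrite !mxE; apply: eq_bigr => i _; rewrite !mxE mulrC. Qed.

Lemma spd_unit (B : 'M[R]_n) : spd B -> B \in unitmx.
Proof.
move=> [BT Bpos]; rewrite -row_free_unit -kermx_eq0.
apply/negPn/negP => /rowV0Pn [v /sub_kermxP vB v0].
have vT0 : v^T != 0.
  by apply: contra v0 => /eqP/(congr1 trmx); rewrite trmxK trmx0 => ->.
have := Bpos _ vT0; rewrite trmxK -mulmxA (_ : B *m v^T = 0).
  by rewrite mulmx0 mxE ltxx.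
by rewrite -BT -trmx_mul vB trmx0.
Qed.

Lemma main_alg (Y AR AS B : 'M[R]_n) (s lam : R) :
  Y *m Y = 1%:M -> Y *m AR *m Y = AR -> Y *m AS *m Y = - AS ->
  AS^T = - AS -> 0 <= s ->
  (forall a b : 'rV[R]_n,
      2 * (a *m AS *m b^T) 0 0 <= s * ((a *m AR *m a^T) 0 0 + (b *m AR *m b^T) 0 0)) ->
  spd B -> B *m B = AR ->
  eigenvalue (invmx B *m (Y *m (AR + AS)) *m invmx B) lam ->
  1 <= lam ^+ 2 <= 1 + s ^+ 2.
Proof.
move=> YY YRY YSY ST s0 H1 Bspd BB /eigenvalueP [v vM v0].
have Bu := spd_unit B Bspd.
have BT : B^T = B by case: Bspd.
have ARu : AR \in unitmx by rewrite -BB unitmx_mul Bu.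
have RY : AR *m Y = Y *m AR by rewrite -{1}YRY -!mulmxA YY mulmx1.
set x := v *m invmx B.
have xB : x *m B = v by rewrite /x mulmxKV.
have e1 : x *m (Y *m (AR + AS)) = lam *: (x *m AR).
  move: vM; rewrite !mulmxA => /(congr1 (mulmx^~ B)).
  by rewrite mulmxKV // -/x -scalemxAl -xB -(mulmxA x B B) BB.  
have e2 : x *m (AR - AS) = lam *: (x *m AR *m Y).
  have YAY : Y *m (AR + AS) *m Y = AR - AS by rewrite mulmxDr mulmxDl YRY YSY.
  have := congr1 (mulmx^~ Y) e1; rewrite /= -scalemxAl => <-.
  by rewrite -[RHS]mulmxA YAY.
have e3 : x *m ((AR - AS) *m invmx AR *m (AR + AS)) = lam ^+ 2 *: (x *m AR).
  rewrite !mulmxA e2 -!scalemxAl -(mulmxA x AR Y) RY mulmxA mulmxK // -mulmxA e1.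
  by rewrite scalerA expr2.
have M1 : (AR - AS) *m invmx AR *m (AR + AS) = AR - AS *m invmx AR *m AS.
  rewrite mulmxBl mulmxV // mulmxBl mul1mx mulmxDr mulmxKV //.
  by rewrite opprD addrA addrK.
have e4 : x *m AR - x *m AS *m invmx AR *m AS = lam ^+ 2 *: (x *m AR).
  by rewrite -e3 M1 mulmxBr !mulmxA.
set y := x *m AS.
set z := y *m invmx AR.
set r := (x *m AR *m x^T) 0 0.
set q := (z *m y^T) 0 0.
have ASx : AS *m x^T = - y^T by rewrite /y [in RHS]trmx_mul ST mulNmx opprK.
have e5 : r + q = lam ^+ 2 * r.
  have := congr1 (fun M => (M *m x^T) 0 0) e4; rewrite /= mulmxBl -scalemxAl.
  by rewrite -(mulmxA _ AS) ASx mulmxN opprK mxE [in RHS]mxE.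
have zAR : z *m AR = y by rewrite /z mulmxKV.
have qe : q = (z *m AR *m z^T) 0 0 by rewrite zAR scal_tr.
have rpos : 0 < r.
  by rewrite /r -BB -{2}BT mulmxA -(mulmxA (x *m B)) -trmx_mul xB sq_gt0.
have q0 : 0 <= q.
  by rewrite qe -BB -{2}BT mulmxA -(mulmxA (z *m B)) -trmx_mul sq_ge0.
have qs : q <= s ^+ 2 * r.
  have key : forall t, 2 * t * q <= s * (t ^+ 2 * q + r).
    move=> t; have := H1 (- t *: z) x.
    have sc : forall (a : R) (M : 'M[R]_1), (a *: M) 0 0 = a * M 0 0 by move=> a M; rewrite mxE.
    have ng : forall (M : 'M[R]_1), (- M) 0 0 = - M 0 0 by move=> M; rewrite mxE.
    rewrite -!scalemxAl -(mulmxA z AS) ASx mulmxN linearZ /= -scalemxAr !sc ng -/r -/q -qe.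
    have -> : 2 * t * q = 2 * (- t * - q) by ring.
    by have -> : t ^+ 2 * q = - t * (- t * q) by ring.
  have [s00|sp] := eqVneq s 0.
    have := key 1; rewrite s00 mul0r mulr1 => h.
    rewrite expr0n /= mul0r; nra.
  have s0' : 0 < s by rewrite lt_def sp s0.
  have := key s^-1.
  have -> : s * (s^-1 ^+ 2 * q + r) = s^-1 * q + s * r by field.
  move=> h.
  have h2 : s^-1 * q <= s * r by lra.
  have := ler_wpM2l (ltW s0') h2; rewrite mulrA divff // mul1r.
  by move=> h3; apply: le_trans h3 _; rewrite le_eqVlt; apply/orP; left; apply/eqP; ring.
apply/andP; split; nra.
Qed.
End LA.


Section TZ.
Context {R : realType} {n : nat}.

Lemma exch_revE (i k : 'I_n) : ((i + k)%N == n.-1) = (k == rev_ord i).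
Proof.
apply/eqP/eqP => [h|->]; first by apply: val_inj => /=; have := ltn_ord i; lia.
by rewrite /=; have := ltn_ord i; lia.
Qed.

Lemma mulYmx (M : 'M[R]_n) i j : (exchange n *m M) i j = M (rev_ord i) j.
Proof.
rewrite mxE (bigD1 (rev_ord i)) //= big1 ?addr0.
  by rewrite mxE exch_revE eqxx mul1r.
by move=> k kn; rewrite mxE exch_revE (negbTE kn) mul0r.
Qed.

Lemma mulmxY (M : 'M[R]_n) i j : (M *m exchange n) i j = M i (rev_ord j).
Proof.
rewrite mxE (bigD1 (rev_ord j)) //= big1 ?addr0.
  by rewrite mxE addnC exch_revE eqxx mulr1.
by move=> k kn; rewrite mxE addnC exch_revE (negbTE kn) mulr0.
Qed.

Lemma YY : exchange n *m exchange n = 1%:M :> 'M[R]_n.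
Proof.
apply/matrixP => i j; rewrite mulYmx !mxE exch_revE rev_ordK eq_sym //.
Qed.

Lemma YTY (c : int -> R) :
  exchange n *m (\matrix_(i < n, j < n) c (i%:Z - j%:Z)) *m exchange n =
  \matrix_(i < n, j < n) c (j%:Z - i%:Z).
Proof.
apply/matrixP => i j; rewrite mulmxY mulYmx !mxE /=; congr c.
have := ltn_ord i; have := ltn_ord j; lia.
Qed.

End TZ.


Section GL.
Context {R : realType}.
Local Notation mu := (@lebesgue_measure R).

Lemma AR_eq n (fR : R -> R) :
  mxRe (toeplitz n fR (fun _ => 0)) =
  (2 * pi)^-1 *: \matrix_(i < n, j < n) Rintegral mu Ipi (hR fR (i%:Z - j%:Z)).
Proof.
apply/matrixP => i j; rewrite !mxE /=; congr (_ * _).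
by apply: eq_Rintegral => t _; rewrite mul0r addr0.
Qed.

Lemma A_eq n (fR fI : R -> R) :
  mu.-integrable Ipi (EFin \o fR) -> mu.-integrable Ipi (EFin \o fI) ->
  mxRe (toeplitz n fR fI) = mxRe (toeplitz n fR (fun _ => 0)) +
  (2 * pi)^-1 *: \matrix_(i < n, j < n) Rintegral mu Ipi (hS fI (i%:Z - j%:Z)).
Proof.
move=> iR iI; rewrite AR_eq -scalerDr.
apply/matrixP => i j; rewrite !mxE /=; congr (_ * _).
rewrite RintegralD //; first exact: measurable_Ipi.
  exact: int_cos.
exact: int_sin.
Qed.

Lemma hR_even (g : R -> R) k : Rintegral mu Ipi (hR g (- k)) = Rintegral mu Ipi (hR g k).
Proof. by apply: eq_Rintegral => t _; rewrite /hR intrN mulNr cosN. Qed.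

Lemma hS_odd (g : R -> R) k : mu.-integrable Ipi (EFin \o g) ->
  Rintegral mu Ipi (hS g (- k)) = - Rintegral mu Ipi (hS g k).
Proof.
move=> ig; rewrite -[RHS]mulN1r -RintegralZl.
- by apply: eq_Rintegral => t _; rewrite /hS intrN mulNr sinN; ring.
- exact: measurable_Ipi.
- exact: int_sin.
Qed.

Lemma Yscal n (k : R) (M : 'M[R]_n) :
  exchange n *m (k *: M) *m exchange n = k *: (exchange n *m M *m exchange n).
Proof. by rewrite -scalemxAr -scalemxAl. Qed.

Lemma YMR n (fR : R -> R) (k : R) :
  exchange n *m (k *: \matrix_(i < n, j < n) Rintegral mu Ipi (hR fR (i%:Z - j%:Z))) *m exchange n =
  k *: \matrix_(i < n, j < n) Rintegral mu Ipi (hR fR (i%:Z - j%:Z)).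
Proof.
rewrite Yscal (YTY (fun k => Rintegral mu Ipi (hR fR k))); congr (_ *: _); apply/matrixP => i j; rewrite !mxE.
by rewrite -opprB hR_even.
Qed.

Lemma YMS n (fI : R -> R) (k : R) : mu.-integrable Ipi (EFin \o fI) ->
  exchange n *m (k *: \matrix_(i < n, j < n) Rintegral mu Ipi (hS fI (i%:Z - j%:Z))) *m exchange n =
  - (k *: \matrix_(i < n, j < n) Rintegral mu Ipi (hS fI (i%:Z - j%:Z))).
Proof.
move=> iI; rewrite Yscal (YTY (fun k => Rintegral mu Ipi (hS fI k))) -scalerN; congr (_ *: _); apply/matrixP => i j; rewrite !mxE.
by rewrite -opprB hS_odd.
Qed.

Lemma MS_tr n (fI : R -> R) (k : R) : mu.-integrable Ipi (EFin \o fI) ->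
  (k *: \matrix_(i < n, j < n) Rintegral mu Ipi (hS fI (i%:Z - j%:Z)))^T =
  - (k *: \matrix_(i < n, j < n) Rintegral mu Ipi (hS fI (i%:Z - j%:Z))).
Proof.
move=> iI; apply/matrixP => i j; rewrite !mxE.
by rewrite -opprB hS_odd // mulrN.
Qed.

Lemma term_bound (u k v : R) : 2 * (u * k * v) <= `|k| * (u ^+ 2 + v ^+ 2).
Proof.
have h1 : 2 * (u * k * v) <= `|k| * (2 * (`|u| * `|v|)).
  rewrite (le_trans (ler_norm _)) // !normrM (ger0_norm (_ : 0 <= 2)) //.
  by rewrite le_eqVlt; apply/orP; left; apply/eqP; ring.
apply: (le_trans h1); apply: ler_wpM2l => //.
have : 0 <= (`|u| - `|v|) ^+ 2 by apply: sqr_ge0.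
by rewrite -(real_normK (num_real u)) -(real_normK (num_real v)); nra.
Qed.

Lemma coord_le n (u : 'rV[R]_n) i : u 0 i ^+ 2 <= (u *m u^T) 0 0.
Proof.
rewrite mxE (bigD1 i) //= mxE -expr2 lerDl.
by apply: sumr_ge0 => j _; rewrite mxE -expr2 sqr_ge0.
Qed.

Lemma gen_bound n (K : 'M[R]_n) (u v : 'rV[R]_n) :
  2 * (u *m K *m v^T) 0 0 <= (\sum_i \sum_j `|K i j|) * ((u *m u^T) 0 0 + (v *m v^T) 0 0).
Proof.
rewrite bil mulr_sumr mulr_suml; apply: ler_sum => i _.
rewrite mulr_sumr mulr_suml; apply: ler_sum => j _.
apply: (le_trans (term_bound _ _ _)); apply: ler_wpM2l => //.
by apply: lerD; apply: coord_le.
Qed.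

Lemma bound_exists n (AR AS B : 'M[R]_n) : spd B -> B *m B = AR ->
  exists c, 0 <= c /\ forall a b : 'rV[R]_n,
    2 * (a *m AS *m b^T) 0 0 <= c * ((a *m AR *m a^T) 0 0 + (b *m AR *m b^T) 0 0).
Proof.
move=> Bspd BB; have Bu := spd_unit B Bspd.
have BT : B^T = B by case: Bspd.
set K := invmx B *m AS *m invmx B.
exists (\sum_i \sum_j `|K i j|); split.
  by apply: sumr_ge0 => i _; apply: sumr_ge0 => j _.
move=> a b.
have e1 : a *m AS *m b^T = (a *m B) *m K *m (b *m B)^T.
  by rewrite trmx_mul BT /K !mulmxA mulmxKV // -!mulmxA mulKVmx.
have e2 : forall c : 'rV[R]_n, c *m AR *m c^T = (c *m B) *m (c *m B)^T.
  by move=> c; rewrite trmx_mul BT -BB !mulmxA.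
by rewrite e1 !e2; apply: gen_bound.
Qed.

Lemma final_itv (lam e : R) : 0 <= e -> 1 <= lam ^+ 2 -> lam ^+ 2 <= (1 + e) ^+ 2 ->
  (-1 - e <= lam <= -1) \/ (1 <= lam <= 1 + e).
Proof.
move=> e0 h1 h2; have [l0|l0] := lerP 0 lam.
  by right; apply/andP; split; nra.
by left; apply/andP; split; nra.
Qed.

Lemma aeT (P : R -> Prop) : (forall x, P x) -> {ae muI, forall x, P x}.
Proof.
by move=> h; exists set0; split => // x /= /(_ (h x)).
Qed.

Lemma aeS (P Q : R -> Prop) : {ae muI, forall x, P x} -> (forall x, P x -> Q x) ->
  {ae muI, forall x, Q x}.
Proof. by move=> h1 h; apply: (negligibleS _ h1) => x /= nQ px; apply: nQ; apply: h. Qed.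

End GL.

Theorem theorem3p4 (R : realType) (n : nat) (fR fI : R -> R) :
  (* f = fR + i fI is in L^1([-pi, pi]) *)
  (@lebesgue_measure R).-integrable Ipi (EFin \o fR) ->
  (@lebesgue_measure R).-integrable Ipi (EFin \o fI) ->
  (* f has real Fourier coefficients *)
  (forall k : int, complex.Im (fourier_coef fR fI k) = 0) ->
  (* fR is essentially positive on [-pi, pi] *)
  {ae muI, forall x, 0 < fR x} ->
  exists eps : R,
    0 <= eps /\
    (eps%:E <= ess_sup muI (fun x => `|fI x / fR x|%:E))%E /\
    (~ {ae muI, forall x, fI x = 0} ->
       (eps%:E < ess_sup muI (fun x => `|fI x / fR x|%:E))%E) /\
    forall B : 'M[R]_n,
      spd B -> B *m B = mxRe (toeplitz n fR (fun _ => 0)) ->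
      forall lam : R,
        eigenvalue (invmx B *m (exchange n *m mxRe (toeplitz n fR fI)) *m invmx B) lam ->
        (-1 - eps <= lam <= -1) \/ (1 <= lam <= 1 + eps).
Proof.
move=> iR iI _ aeR.
set AR := mxRe (toeplitz n fR (fun _ => 0)).
set k : R := (2 * pi)^-1.
have k0 : 0 < k by rewrite /k invr_gt0 mulr_gt0 // pi_gt0.
set MS := k *: \matrix_(i < n, j < n) Rintegral (@lebesgue_measure R) Ipi (hS fI (i%:Z - j%:Z)).
have AE : mxRe (toeplitz n fR fI) = AR + MS by rewrite /AR /MS A_eq.
have YRY : exchange n *m AR *m exchange n = AR by rewrite /AR AR_eq YMR.
have YSY : exchange n *m MS *m exchange n = - MS by rewrite /MS YMS.
have STr : MS^T = - MS by rewrite /MS MS_tr.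
have key : forall s, 0 <= s ->
   (forall a b : 'rV[R]_n,
      2 * (a *m MS *m b^T) 0 0 <= s * ((a *m AR *m a^T) 0 0 + (b *m AR *m b^T) 0 0)) ->
   forall B, spd B -> B *m B = AR -> forall lam,
   eigenvalue (invmx B *m (exchange n *m mxRe (toeplitz n fR fI)) *m invmx B) lam ->
   1 <= lam ^+ 2 <= 1 + s ^+ 2.
  move=> s s0 H B Bspd BB lam; rewrite AE; apply: main_alg => //.
  exact: YY.
have S0 : (0 <= ess_sup muI (fun x => `|fI x / fR x|%:E))%E.
  apply: ess_sup_gee; first exact: muI_gt0.
  by apply: aeT => x; rewrite lee_fin normr_ge0.
move: S0; case Es : (ess_sup muI (fun x => `|fI x / fR x|%:E)) => [s| |] S0.
- have s0 : 0 <= s by rewrite -lee_fin.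
  have aeI : {ae muI, forall x, `|fI x / fR x| <= s}.
    apply: (aeS _ _ (ess_sup_ge muI (fun x => `|fI x / fR x|%:E))) => x.
    by rewrite Es lee_fin.
  have H1s : forall a b : 'rV[R]_n,
      2 * (a *m MS *m b^T) 0 0 <= s * ((a *m AR *m a^T) 0 0 + (b *m AR *m b^T) 0 0).
    by move=> a b; rewrite /AR AR_eq /MS; apply: H1an.
  set r := Num.sqrt (1 + s ^+ 2).
  have r0 : 0 <= r by apply: sqrtr_ge0.
  have r2 : r ^+ 2 = 1 + s ^+ 2 by rewrite sqr_sqrtr // addr_ge0 // sqr_ge0.
  exists (r - 1); split; first by nra.
  split; first by rewrite lee_fin; nra.
  split.
    move=> nae; rewrite lte_fin.
    have sp : 0 < s.
      rewrite lt_def s0 andbT; apply/negP => /eqP s00; apply: nae.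
      apply: (ae2 _ _ _ aeI aeR) => x h1 h2.
      move: h1; rewrite s00 normr_le0 mulf_eq0 invr_eq0 (gt_eqF h2) orbF.
      by move/eqP.
    nra.
  move=> B Bspd BB lam ev; have /andP [h1 h2] := key s s0 H1s B Bspd BB lam ev.
  apply: final_itv => //; first by nra.
  by rewrite addrC subrK r2.
- have [[B0 [B0spd B0B]]|noB] := pselect (exists B, spd B /\ B *m B = AR).
    have [c [c0 Hc]] := bound_exists n AR MS B0 B0spd B0B.
    exists c; split => //; split; first exact: leey.
    split; first by move=> _; exact: ltey.
    move=> B Bspd BB lam ev; have /andP [h1 h2] := key c c0 Hc B Bspd BB lam ev.
    by apply: final_itv => //; nra.
  exists 0; split => //; split; first exact: leey.
  split; first by move=> _; exact: ltey.
  by move=> B Bspd BB; exfalso; apply: noB; exists B.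
- by [].
Qed.
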